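(* Let $X$ be a real UMD Banach space, $1<p<\infty$, $1/p+1/p'=1$, $\beta_{p,X}$ its $\mathrm{UMD}_p$ constant, and let $\mathfrak D=\{(\mathbf f,\mathbf F,\mathbf g,\mathbf G)\in X\times\mathbb{R}\times X^*\times\mathbb{R}:\|\mathbf f\|_X^p\le\mathbf F,\ \|\mathbf g\|_{X^*}^{p'}\le\mathbf G\}$. Let $\mathcal B:\mathfrak D\to\mathbb{R}$ be any function such that (a) $0\le\mathcal B(\mathbf f,\mathbf F,\mathbf g,\mathbf G)\le4\beta_{p,X}\mathbf F^{1/p}\mathbf G^{1/p'}$ for all points of $\mathfrak D$, and (b) for all $A,A_+,A_-\in\mathfrak D$ with $A=(A_++A_-)/2$, writing $A_\pm=(\mathbf f_\pm,\mathbf F_\pm,\mathbf g_\pm,\mathbf G_\pm)$, $\mathcal B(A)\ge\frac12(\mathcal B(A_+)+\mathcal B(A_-))+|\langle\mathbf f_+-\mathbf f_-,\mathbf g_+-\mathbf g_-\rangle_{X,X^*}|$. Fix $k\ge1$ and a dyadic interval $I_0$. For every $I\in\mathcal D_n(I_0)$, $0\le n\le k$, let $A_I=(\mathbf f_I,\mathbf F_I,\mathbf g_I,\mathbf G_I)\in\mathfrak D$ be given such that $A_I=(A_{I^+}+A_{I^-})/2$ whenever $I\in\mathcal D_n(I_0)$ with $n\le k-1$. For $K,L\in\mathcal D_k(I_0)$ let $$\lambda_{KL}=\Big\langle\frac{\mathbf f_K-\mathbf f_{I_0}}{2^k},\frac{\mathbf g_L-\mathbf g_{I_0}}{2^k}\Big\rangle_{X,X^*}+\Big\langle\frac{\mathbf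 f_L-\mathbf f_{I_0}}{2^k},\frac{\mathbf g_K-\mathbf g_{I_0}}{2^k}\Big\rangle_{X,X^*}.$$ Then $$\sum_{K,L\in\mathcal D_k(I_0)}|\lambda_{KL}|\le c\,2^{k/2}\Big(\mathcal B(A_{I_0})-2^{-k}\sum_{I\in\mathcal D_k(I_0)}\mathcal B(A_I)\Big),$$ where $c>0$ is an absolute constant.
   Context: $\mathcal D$ is a dyadic system of $\mathbb{R}$; for $I\in\mathcal D$, $I^+$ and $I^-$ are its two children, and $\mathcal D_n(I)=\{J\in\mathcal D:J\subset I,|J|=2^{-n}|I|\}$ (so $\mathcal D_0(I_0)=\{I_0\}$). $\beta_{p,X}$ is the least constant with $\|\sum\varepsilon_kd_k\|_{L^p(\mathbb{R};X)}\le\beta_{p,X}\|\sum d_k\|_{L^p(\mathbb{R};X)}$ for all $X$-valued martingale difference sequences and signs $\varepsilon_k=\pm1$. *)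

(* Defs.v *)
From Stdlib Require Import Reals Lra Lia.
Open Scope R_scope.

Record BanachSpace := {
  carrier :> Type;
  vzero : carrier;
  vadd : carrier -> carrier -> carrier;
  vopp : carrier -> carrier;
  vscal : R -> carrier -> carrier;
  vnorm : carrier -> R;
  vadd_assoc : forall x y z, vadd x (vadd y z) = vadd (vadd x y) z;
  vadd_comm : forall x y, vadd x y = vadd y x;
  vadd_0 : forall x, vadd vzero x = x;
  vadd_opp : forall x, vadd x (vopp x) = vzero;
  vscal_assoc : forall a b x, vscal a (vscal b x) = vscal (a * b) x;
  vscal_1 : forall x, vscal 1 x = x;
  vscal_addr : forall a x y, vscal a (vadd x y) = vadd (vscal a x) (vscal a y);
  vscal_addl : forall a b x, vscal (a + b) x = vadd (vscal a x) (vscal b x);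
  vnorm_nonneg : forall x, 0 <= vnorm x;
  vnorm_eq0 : forall x, vnorm x = 0 -> x = vzero;
  vnorm_scal : forall a x, vnorm (vscal a x) = Rabs a * vnorm x;
  vnorm_triangle : forall x y, vnorm (vadd x y) <= vnorm x + vnorm y;
  vcomplete : forall u : nat -> carrier,
    (forall eps, 0 < eps -> exists N, forall m n, (N <= m)%nat -> (N <= n)%nat ->
        vnorm (vadd (u m) (vopp (u n))) < eps) ->
    exists l, forall eps, 0 < eps -> exists N, forall n, (N <= n)%nat ->
        vnorm (vadd (u n) (vopp l)) < eps
}.

Arguments vzero {_}. Arguments vadd {_} _ _. Arguments vopp {_} _.
Arguments vscal {_} _ _. Arguments vnorm {_} _.

Definition vsub {X : BanachSpace} (x y : X) : X := vadd x (vopp y).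

(* Real power x^a for x >= 0, a > 0 (with 0^a = 0). *)
Definition rpow (x a : R) : R := if Rle_dec x 0 then 0 else Rpower x a.

Fixpoint rsum (n : nat) (f : nat -> R) : R :=
  match n with O => 0 | S m => rsum m f + f m end.
Fixpoint vsum {X : BanachSpace} (n : nat) (f : nat -> X) : X :=
  match n with O => vzero | S m => vadd (vsum m f) (f m) end.

(* Elements of the dual X^*: bounded linear functionals X -> R. *)
Definition is_dual (X : BanachSpace) (g : X -> R) : Prop :=
  (forall x y, g (vadd x y) = g x + g y) /\
  (forall a x, g (vscal a x) = a * g x) /\
  (exists M, forall x, Rabs (g x) <= M * vnorm x).

Definition dual_norm_is (X : BanachSpace) (g : X -> R) (r : R) : Prop :=
  is_lub (fun t => exists x : X, vnorm x <= 1 /\ t = Rabs (g x)) r.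

Definition inD (X : BanachSpace) (p p' : R) (f : X) (F : R) (g : X -> R) (G : R) : Prop :=
  rpow (vnorm f) p <= F /\ is_dual X g /\
  exists r, dual_norm_is X g r /\ rpow r p' <= G.

(* ---- UMD_p constant (dyadic martingales on [0,1)) ----
   Level-n dyadic intervals of [0,1) are indexed by j < 2^n; the children
   of j are 2j and 2j+1.  A dyadic martingale up to level N is
   f : nat -> nat -> X with f n j = (f (n+1) (2j) + f (n+1) (2j+1))/2. *)
Definition mdiff {X : BanachSpace} (f : nat -> nat -> X) (n j : nat) : X :=
  match n with O => f O j | S m => vsub (f n j) (f m (Nat.div j 2)) end.

(* value of sum_{n<=N} eps_n d_n on the leaf j of level N *)
Definition mtransform {X : BanachSpace} (eps : nat -> R) (f : nat -> nat -> X)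
  (N j : nat) : X :=
  vsum (S N) (fun n => vscal (eps n) (mdiff f n (Nat.div j (2 ^ (N - n))))).

Definition Lp_norm_leaves {X : BanachSpace} (p : R) (N : nat) (h : nat -> X) : R :=
  rpow (rsum (2 ^ N) (fun j => / INR (2 ^ N) * rpow (vnorm (h j)) p)) (1 / p).

Definition umd_bound (X : BanachSpace) (p beta : R) : Prop :=
  forall (N : nat) (f : nat -> nat -> X) (eps : nat -> R),
    (forall n j, (n < N)%nat -> (j < 2 ^ n)%nat ->
       f n j = vscal (1/2) (vadd (f (S n) (2 * j)%nat) (f (S n) (2 * j + 1)%nat))) ->
    (forall n, eps n = 1 \/ eps n = -1) ->
    Lp_norm_leaves p N (mtransform eps f N)
      <= beta * Lp_norm_leaves p N (mtransform (fun _ => 1) f N).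

(* beta is the UMD_p constant of X (the least such constant); its existence
   means X is UMD. *)
Definition umd_constant (X : BanachSpace) (p beta : R) : Prop :=
  umd_bound X p beta /\ forall beta', umd_bound X p beta' -> beta <= beta'.

(* Main.v *)
Require Import Defs.
From Stdlib Require Import Reals Lra Lia FunctionalExtensionality.
Open Scope R_scope.


Lemma lt_pow2_testbit (a m n : nat) : (a < 2 ^ m)%nat -> (m <= n)%nat -> Nat.testbit a n = false.
Proof.
  intros Ha Hn. destruct (Nat.eq_dec a 0) as [->|Ha0]. apply Nat.bits_0.
  apply Nat.bits_above_log2. apply Nat.log2_lt_pow2 in Ha; lia.
Qed.

Lemma land_pow2_lt (m i : nat) : (i < 2 ^ m)%nat -> Nat.land (2 ^ m) i = 0%nat.
Proof.
  intros Hi. apply Nat.bits_inj. intro n. rewrite Nat.land_spec, Nat.bits_0, Nat.pow2_bits_eqb.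
  destruct (Nat.eqb_spec m n) as [->|]; simpl; auto.
  apply lt_pow2_testbit with n; auto.
Qed.

Lemma add_pow2_lxor (m i : nat) : (i < 2 ^ m)%nat -> (2 ^ m + i)%nat = Nat.lxor (2 ^ m) i.
Proof. intros; apply Nat.add_nocarry_lxor, land_pow2_lt; auto. Qed.

Lemma lxor_lt_pow2 (m a b : nat) : (a < 2 ^ m)%nat -> (b < 2 ^ m)%nat -> (Nat.lxor a b < 2 ^ m)%nat.
Proof.
  intros Ha Hb.
  destruct (Nat.eq_dec (Nat.lxor a b) 0) as [->|H0]. apply Nat.neq_0_lt_0, Nat.pow_nonzero; lia.
  apply Nat.log2_lt_pow2; [lia|].
  assert (Hla : (Nat.log2 a < m)%nat).
  { destruct (Nat.eq_dec a 0) as [->|]. rewrite Nat.log2_nonpos by lia. destruct m; [|lia].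
    simpl in Ha, Hb. assert (b = 0%nat) as -> by lia. rewrite Nat.lxor_0_r in H0. lia.
    apply Nat.log2_lt_pow2; lia. }
  assert (Hlb : (Nat.log2 b < m)%nat).
  { destruct (Nat.eq_dec b 0) as [->|]. rewrite Nat.log2_nonpos by lia. destruct m; [|lia]. simpl in Ha; assert (a = 0%nat) as -> by lia. rewrite Nat.lxor_0_r in H0. lia.
    apply Nat.log2_lt_pow2; lia. }
  pose proof (Nat.log2_lxor a b). lia.
Qed.

Lemma lxor_hi_l (m i j : nat) : (i < 2 ^ m)%nat -> (j < 2 ^ m)%nat ->
  Nat.lxor (2 ^ m + i) j = (2 ^ m + Nat.lxor i j)%nat.
Proof.
  intros Hi Hj. rewrite (add_pow2_lxor m i Hi), (add_pow2_lxor m (Nat.lxor i j)) by (apply lxor_lt_pow2; auto).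
  apply Nat.lxor_assoc.
Qed.

Lemma lxor_hi_r (m i j : nat) : (i < 2 ^ m)%nat -> (j < 2 ^ m)%nat ->
  Nat.lxor i (2 ^ m + j) = (2 ^ m + Nat.lxor i j)%nat.
Proof.
  intros Hi Hj. rewrite Nat.lxor_comm, lxor_hi_l, Nat.lxor_comm; auto.
Qed.

Lemma lxor_hi_hi (m i j : nat) : (i < 2 ^ m)%nat -> (j < 2 ^ m)%nat ->
  Nat.lxor (2 ^ m + i) (2 ^ m + j) = Nat.lxor i j.
Proof.
  intros Hi Hj. rewrite (add_pow2_lxor m i Hi), (add_pow2_lxor m j Hj).
  rewrite (Nat.lxor_comm (2^m) i), Nat.lxor_assoc, <- (Nat.lxor_assoc (2^m) (2^m) j), Nat.lxor_nilpotent, Nat.lxor_0_l.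
  reflexivity.
Qed.
Fixpoint tav {T : Type} (md : T -> T -> T) (m : nat) (P : nat -> T) : T :=
  match m with
  | O => P O
  | S m' => md (tav md m' P) (tav md m' (fun i => P (2 ^ m' + i)%nat))
  end.

Lemma tav_ext {T} (md : T -> T -> T) m (P Q : nat -> T) :
  (forall i, (i < 2 ^ m)%nat -> P i = Q i) -> tav md m P = tav md m Q.
Proof.
  revert P Q; induction m as [|m IH]; intros P Q H; simpl.
  - apply H. simpl; lia.
  - assert (0 < 2 ^ m)%nat by (apply Nat.neq_0_lt_0, Nat.pow_nonzero; lia).
    simpl in H. f_equal; apply IH; intros i Hi; apply H; lia.
Qed.

Lemma tav_xor {T} (md : T -> T -> T) (Hc : forall a b, md a b = md b a) m (P : nat -> T) r :
  (r < 2 ^ m)%nat -> tav md m (fun i => P (Nat.lxor i r)) = tav md m P.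
Proof.
  revert P r; induction m as [|m IH]; intros P r Hr; simpl.
  - simpl in Hr. assert (r = 0%nat) as -> by lia. reflexivity.
  - simpl in Hr. destruct (Nat.lt_ge_cases r (2 ^ m)) as [Hlt|Hge].
    + f_equal.
      * apply IH; auto.
      * rewrite (tav_ext md m _ (fun i => P (2 ^ m + Nat.lxor i r)%nat)).
        apply (IH (fun j => P (2 ^ m + j)%nat)); auto.
        intros i Hi. rewrite lxor_hi_l; auto.
    + set (r' := (r - 2 ^ m)%nat). assert (Hr' : (r' < 2 ^ m)%nat) by (unfold r'; lia).
      assert (Er : r = (2 ^ m + r')%nat) by (unfold r'; lia).
      rewrite Hc. f_equal.
      * rewrite (tav_ext md m _ (fun i => P (Nat.lxor i r'))).
        apply IH; auto.
        intros i Hi. rewrite Er, lxor_hi_hi; auto.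
      * rewrite (tav_ext md m _ (fun i => P (2 ^ m + Nat.lxor i r')%nat)).
        apply (IH (fun j => P (2 ^ m + j)%nat)); auto.
        intros i Hi. rewrite Er, lxor_hi_r; auto.
Qed.

Lemma tav_md {T} (md : T -> T -> T)
  (Hm : forall a b c d, md (md a b) (md c d) = md (md a c) (md b d)) m (P Q : nat -> T) :
  tav md m (fun i => md (P i) (Q i)) = md (tav md m P) (tav md m Q).
Proof.
  revert P Q; induction m as [|m IH]; intros P Q; simpl; auto.
  rewrite (IH P Q), (IH (fun i => P (2 ^ m + i)%nat) (fun i => Q (2 ^ m + i)%nat)). apply Hm.
Qed.

Lemma tav_const {T} (md : T -> T -> T) (Hi : forall a, md a a = a) m c :
  tav md m (fun _ => c) = c.
Proof. induction m; simpl; auto. rewrite IHm; auto. Qed.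

Definition Rmid (a b : R) : R := (a + b) / 2.
Definition E (m : nat) (h : nat -> R) : R := tav Rmid m h.

Lemma Rmid_medial : forall a b c d, Rmid (Rmid a b) (Rmid c d) = Rmid (Rmid a c) (Rmid b d).
Proof. intros; unfold Rmid; lra. Qed.
Lemma Rmid_comm : forall a b, Rmid a b = Rmid b a.
Proof. intros; unfold Rmid; lra. Qed.

Lemma E_ext m P Q : (forall i, (i < 2 ^ m)%nat -> P i = Q i) -> E m P = E m Q.
Proof. apply tav_ext. Qed.

Lemma E_lin m a b P Q : E m (fun i => a * P i + b * Q i) = a * E m P + b * E m Q.
Proof.
  revert P Q; induction m as [|m IH]; intros P Q; unfold E in *; simpl; auto.
  rewrite IH, IH. unfold Rmid; lra.
Qed.

Lemma E_const m c : E m (fun _ => c) = c.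
Proof. apply tav_const. intros; unfold Rmid; lra. Qed.

Lemma E_add m P Q : E m (fun i => P i + Q i) = E m P + E m Q.
Proof.
  rewrite <- (Rmult_1_l (E m P)), <- (Rmult_1_l (E m Q)), <- E_lin. apply E_ext; intros; lra.
Qed.

Lemma E_scal m a P : E m (fun i => a * P i) = a * E m P.
Proof.
  replace (a * E m P) with (a * E m P + 0 * E m P) by lra. rewrite <- E_lin. apply E_ext; intros; lra.
Qed.

Lemma E_mono m P Q : (forall i, (i < 2 ^ m)%nat -> P i <= Q i) -> E m P <= E m Q.
Proof.
  revert P Q; induction m as [|m IH]; intros P Q H; unfold E in *; simpl.
  - apply H; simpl; lia.
  - assert (0 < 2 ^ m)%nat by (apply Nat.neq_0_lt_0, Nat.pow_nonzero; lia).
    simpl in H.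
    assert (tav Rmid m P <= tav Rmid m Q) by (apply IH; intros; apply H; lia).
    assert (tav Rmid m (fun i => P (2 ^ m + i)%nat) <= tav Rmid m (fun i => Q (2 ^ m + i)%nat))
      by (apply IH; intros; apply H; lia).
    unfold Rmid in *; lra.
Qed.

Lemma E_abs m P : Rabs (E m P) <= E m (fun i => Rabs (P i)).
Proof.
  apply Rabs_le. split.
  - assert (E m (fun i => -1 * Rabs (P i)) <= E m P).
    { apply E_mono. intros. unfold Rabs; destruct Rcase_abs; lra. }
    rewrite E_scal in H. lra.
  - apply E_mono. intros. apply Rle_abs.
Qed.

Lemma E_fubini m n (H : nat -> nat -> R) :
  E m (fun K => E n (fun r => H K r)) = E n (fun r => E m (fun K => H K r)).
Proof.
  revert H; induction m as [|m IH]; intros H; unfold E in *; simpl; auto.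
  rewrite (IH H), (IH (fun K r => H (2 ^ m + K)%nat r)).
  symmetry. apply (tav_md Rmid Rmid_medial).
Qed.


Lemma rsumsplit a b h : rsum (a + b) h = rsum a h + rsum b (fun i => h (a + i)%nat).
Proof.
  induction b; simpl. rewrite Nat.add_0_r; lra.
  rewrite Nat.add_succ_r. simpl. rewrite IHb. lra.
Qed.

Lemma rsumE m h : rsum (2 ^ m) h = 2 ^ m * E m h.
Proof.
  revert h; induction m as [|m IH]; intros h; unfold E in *; simpl.
  - lra.
  - rewrite Nat.add_0_r, rsumsplit, IH, IH. unfold Rmid. lra.
Qed.

Lemma exp_le_mono x y : x <= y -> exp x <= exp y.
Proof. intros H. destruct (Rle_lt_or_eq_dec _ _ H) as [H' | ->]; [left; apply exp_increasing; auto | lra]. Qed.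

Lemma bern q s : 1 <= q -> 1 - q <= exp (q * s) - q * exp s.
Proof.
  intros Hq.
  set (f := (comp exp (mult_real_fct q id) - mult_real_fct q exp)%F).
  set (f' := fun c => exp (q * c) * (q * 1) - q * exp c).
  assert (Hd : forall c, derivable_pt_lim f c (f' c)).
  { intros c. unfold f, f'. apply derivable_pt_lim_minus.
    - apply derivable_pt_lim_comp. apply derivable_pt_lim_scal, derivable_pt_lim_id.
      apply derivable_pt_lim_exp.
    - apply derivable_pt_lim_scal, derivable_pt_lim_exp. }
  assert (Hf : forall x, f x = exp (q * x) - q * exp x).
  { intros x. unfold f, comp, mult_real_fct, minus_fct, id. reflexivity. }
  assert (Hf0 : f 0 = 1 - q) by (rewrite Hf, Rmult_0_r, exp_0; ring).
  destruct (Rtotal_order s 0) as [Hs|[Hs|Hs]].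
  - destruct (MVT_cor2 f f' s 0 Hs (fun c _ => Hd c)) as [c [Hc1 Hc2]].
    assert (exp (q * c) <= exp c) by (apply exp_le_mono; nra).
    assert (f' c <= 0) by (unfold f'; nra).
    rewrite <- Hf. nra.
  - subst. rewrite Rmult_0_r, exp_0. lra.
  - destruct (MVT_cor2 f f' 0 s Hs (fun c _ => Hd c)) as [c [Hc1 Hc2]].
    assert (exp c <= exp (q * c)) by (apply exp_le_mono; nra).
    assert (0 <= f' c) by (unfold f'; nra).
    rewrite <- Hf. nra.
Qed.

Lemma rpow_nonneg x q : 0 <= rpow x q.
Proof. unfold rpow; destruct Rle_dec; [lra | unfold Rpower; left; apply exp_pos]. Qed.

Lemma rpow_pos_eq x q : 0 < x -> rpow x q = Rpower x q.
Proof. intros; unfold rpow; destruct Rle_dec; [lra | auto]. Qed.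

Lemma rpow_mono q x y : 0 < q -> 0 <= x <= y -> rpow x q <= rpow y q.
Proof.
  intros Hq Hxy. destruct (Rle_dec x 0) as [Hx|Hx].
  - unfold rpow at 1. destruct Rle_dec; [apply rpow_nonneg | lra].
  - rewrite !rpow_pos_eq by lra. apply Rle_Rpower_l; lra.
Qed.

Lemma rpow_tangent q m x : 1 <= q -> 0 < m -> 0 <= x ->
  rpow m q * (1 + q * (x / m - 1)) <= rpow x q.
Proof.
  intros Hq Hm Hx. rewrite (rpow_pos_eq m) by lra.
  assert (Hpm : 0 < Rpower m q) by (unfold Rpower; apply exp_pos).
  destruct (Rle_lt_or_eq_dec _ _ Hx) as [Hx' | <-].
  - rewrite rpow_pos_eq by lra.
    assert (Hxm : 0 < x / m) by (apply Rdiv_lt_0_compat; lra).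
    replace x with (m * (x / m)) at 2 by (field; lra).
    rewrite <- Rpower_mult_distr by lra.
    apply Rmult_le_compat_l; [lra|].
    pose proof (bern q (ln (x / m)) Hq) as Hb.
    rewrite exp_ln in Hb by lra. unfold Rpower. rewrite (Rmult_comm q). lra.
  - unfold rpow at 1. destruct Rle_dec; [|lra].
    replace (0 / m) with 0 by (field; lra). nra.
Qed.

Lemma rpow_conv q a b : 1 <= q -> 0 <= a -> 0 <= b ->
  rpow ((a + b) / 2) q <= (rpow a q + rpow b q) / 2.
Proof.
  intros Hq Ha Hb. destruct (Rle_dec ((a + b) / 2) 0) as [H0|H0].
  - unfold rpow at 1. destruct Rle_dec; [|lra].
    pose proof (rpow_nonneg a q); pose proof (rpow_nonneg b q); lra.
  - set (m := (a + b) / 2) in *.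
    pose proof (rpow_tangent q m a Hq ltac:(lra) Ha).
    pose proof (rpow_tangent q m b Hq ltac:(lra) Hb).
    assert (E : (a / m - 1) + (b / m - 1) = 0) by (unfold m in *; field; lra).
    assert (rpow m q * (1 + q * (a / m - 1)) + rpow m q * (1 + q * (b / m - 1)) = 2 * rpow m q).
    { replace (b / m - 1) with (- (a / m - 1)) by lra. ring. }
    lra.
Qed.

Lemma vmid_comm (X : BanachSpace) (a b : X) : vscal (1/2) (vadd a b) = vscal (1/2) (vadd b a).
Proof. rewrite vadd_comm; auto. Qed.

Lemma vmid_idem (X : BanachSpace) (a : X) : vscal (1/2) (vadd a a) = a.
Proof.
  rewrite <- (vscal_1 X a) at 1 2. rewrite <- vscal_addl, vscal_assoc.
  replace (1 / 2 * (1 + 1)) with 1 by field. apply vscal_1.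
Qed.

Lemma vadd_medial (X : BanachSpace) (a b c d : X) :
  vadd (vadd a b) (vadd c d) = vadd (vadd a c) (vadd b d).
Proof.
  rewrite <- !vadd_assoc. f_equal. rewrite !vadd_assoc. f_equal. apply vadd_comm.
Qed.

Lemma vmid_medial (X : BanachSpace) (a b c d : X) :
  vscal (1/2) (vadd (vscal (1/2) (vadd a b)) (vscal (1/2) (vadd c d))) =
  vscal (1/2) (vadd (vscal (1/2) (vadd a c)) (vscal (1/2) (vadd b d))).
Proof. rewrite (vscal_addr X (1/2) a b), (vscal_addr X (1/2) c d), (vscal_addr X (1/2) a c), (vscal_addr X (1/2) b d), vadd_medial. reflexivity. Qed.

Lemma vnorm_mid (X : BanachSpace) (a b : X) :
  vnorm (vscal (1/2) (vadd a b)) <= (vnorm a + vnorm b) / 2.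
Proof.
  rewrite vnorm_scal. rewrite Rabs_pos_eq by lra. pose proof (vnorm_triangle X a b). lra.
Qed.

Lemma lin_zero (X : BanachSpace) (g : X -> R) : (forall x y, g (vadd x y) = g x + g y) -> g vzero = 0.
Proof. intros H. pose proof (H vzero vzero). rewrite vadd_0 in H0. lra. Qed.

Lemma lin_sub (X : BanachSpace) (g : X -> R) : (forall x y, g (vadd x y) = g x + g y) ->
  forall x y, g (vsub x y) = g x - g y.
Proof.
  intros H x y. unfold vsub. rewrite H. pose proof (H y (vopp y)). rewrite vadd_opp, lin_zero in H0 by auto.
  lra.
Qed.

Lemma Rabs_mid u v : Rabs ((u + v) / 2) <= (Rabs u + Rabs v) / 2.
Proof. unfold Rabs; repeat destruct Rcase_abs; lra. Qed.

Lemma dual_norm_nonneg (X : BanachSpace) g r : dual_norm_is X g r -> 0 <= r.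
Proof.
  intros [Hub _]. apply Rle_trans with (Rabs (g (vscal 0 vzero))); [apply Rabs_pos|].
  apply Hub. exists (vscal 0 vzero). split; auto. rewrite vnorm_scal, Rabs_R0. lra.
Qed.

Lemma inD_mid (X : BanachSpace) p p' f1 F1 g1 G1 f2 F2 g2 G2 :
  1 <= p -> 1 <= p' ->
  inD X p p' f1 F1 g1 G1 -> inD X p p' f2 F2 g2 G2 ->
  inD X p p' (vscal (1/2) (vadd f1 f2)) ((F1 + F2) / 2) (fun x => (g1 x + g2 x) / 2) ((G1 + G2) / 2).
Proof.
  intros Hp Hp' [Hf1 [[Ha1 [Hs1 [M1 HM1]]] [r1 [Hr1 Hrr1]]]] [Hf2 [[Ha2 [Hs2 [M2 HM2]]] [r2 [Hr2 Hrr2]]]].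
  split; [|split; [split; [|split] | ]].
  - eapply Rle_trans. apply rpow_mono; [lra| split; [apply vnorm_nonneg | apply vnorm_mid]].
    eapply Rle_trans. apply rpow_conv; auto using vnorm_nonneg. lra.
  - intros x y. rewrite Ha1, Ha2. lra.
  - intros a x. rewrite Hs1, Hs2. field.
  - exists ((M1 + M2) / 2). intros x. eapply Rle_trans. apply Rabs_mid.
    pose proof (HM1 x); pose proof (HM2 x). lra.
  - set (S := fun t => exists x : X, vnorm x <= 1 /\ t = Rabs ((g1 x + g2 x) / 2)).
    assert (Hub : forall t, S t -> t <= (r1 + r2) / 2).
    { intros t [x [Hx ->]]. eapply Rle_trans. apply Rabs_mid.
      assert (Rabs (g1 x) <= r1) by (apply Hr1; exists x; auto).
      assert (Rabs (g2 x) <= r2) by (apply Hr2; exists x; auto). lra. }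
    destruct (completeness S) as [r Hr].
    { exists ((r1 + r2) / 2). intros t Ht; apply Hub; auto. }
    { exists (Rabs ((g1 (vscal 0 vzero) + g2 (vscal 0 vzero)) / 2)). exists (vscal 0 vzero). split; auto.
      rewrite vnorm_scal, Rabs_R0. lra. }
    exists r. split; auto.
    assert (r <= (r1 + r2) / 2) by (apply Hr; intros t Ht; apply Hub; auto).
    pose proof (dual_norm_nonneg X g1 r1 Hr1). pose proof (dual_norm_nonneg X g2 r2 Hr2).
    pose proof (dual_norm_nonneg X _ r Hr).
    eapply Rle_trans. apply rpow_mono; [lra| split; eauto].
    eapply Rle_trans. apply rpow_conv; auto. lra.
Qed.

Record pt (X : BanachSpace) := mkpt { pf : X; pF : R; pg : X -> R; pG : R }.
Arguments mkpt {X}. Arguments pf {X}. Arguments pF {X}. Arguments pg {X}. Arguments pG {X}.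

Definition midp {X : BanachSpace} (a b : pt X) : pt X :=
  mkpt (vscal (1/2) (vadd (pf a) (pf b))) ((pF a + pF b) / 2)
       (fun x => (pg a x + pg b x) / 2) ((pG a + pG b) / 2).

Lemma midp_comm {X : BanachSpace} (a b : pt X) : midp a b = midp b a.
Proof.
  unfold midp. f_equal; [apply vmid_comm | lra | apply functional_extensionality; intros; lra | lra].
Qed.

Lemma midp_idem {X : BanachSpace} (a : pt X) : midp a a = a.
Proof.
  destruct a as [a1 a2 a3 a4]. unfold midp; simpl.
  f_equal; [apply vmid_idem | lra | apply functional_extensionality; intros; lra | lra].
Qed.

Lemma midp_medial {X : BanachSpace} (a b c d : pt X) :
  midp (midp a b) (midp c d) = midp (midp a c) (midp b d).
Proof.
  unfold midp; simpl.
  f_equal; [apply vmid_medial | lra | apply functional_extensionality; intros; lra | lra].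
Qed.

Lemma tav_S {T} (md : T -> T -> T) m P :
  tav md (S m) P = md (tav md m P) (tav md m (fun i => P (2 ^ m + i)%nat)).
Proof. reflexivity. Qed.

Lemma tav_pf_lin {X : BanachSpace} (h : X -> R) m (P : nat -> pt X) :
  (forall x y, h (vadd x y) = h x + h y) -> (forall a x, h (vscal a x) = a * h x) ->
  h (pf (tav midp m P)) = E m (fun i => h (pf (P i))).
Proof.
  intros Ha Hs. revert P; induction m as [|m IH]; intros P; [reflexivity|].
  rewrite tav_S. unfold E. rewrite tav_S. fold (E m (fun i => h (pf (P i)))).
  fold (E m (fun i => h (pf (P (2 ^ m + i)%nat)))).
  rewrite <- IH, <- (IH (fun i => P (2 ^ m + i)%nat)). unfold midp; simpl.
  rewrite Hs, Ha. unfold Rmid; lra.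
Qed.

Lemma tav_pg {X : BanachSpace} m (P : nat -> pt X) x :
  pg (tav midp m P) x = E m (fun i => pg (P i) x).
Proof.
  revert P; induction m as [|m IH]; intros P; [reflexivity|].
  rewrite tav_S. unfold E. rewrite tav_S. fold (E m (fun i => pg (P i) x)).
  fold (E m (fun i => pg (P (2 ^ m + i)%nat) x)).
  rewrite <- IH, <- (IH (fun i => P (2 ^ m + i)%nat)). reflexivity.
Qed.

Definition inDp (X : BanachSpace) p p' (a : pt X) : Prop := inD X p p' (pf a) (pF a) (pg a) (pG a).

Lemma tav_inD (X : BanachSpace) p p' m (P : nat -> pt X) :
  1 <= p -> 1 <= p' -> (forall i, (i < 2 ^ m)%nat -> inDp X p p' (P i)) -> inDp X p p' (tav midp m P).
Proof.
  intros Hp Hp'. revert P; induction m as [|m IH]; intros P H.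
  - apply H. simpl; lia.
  - assert (0 < 2 ^ m)%nat by (apply Nat.neq_0_lt_0, Nat.pow_nonzero; lia).
    rewrite tav_S. unfold inDp, midp; simpl. apply inD_mid; auto.
    + apply IH. intros; apply H. simpl; lia.
    + apply (IH (fun i => P (2 ^ m + i)%nat)). intros; apply H. simpl; lia.
Qed.

Lemma jensen (X : BanachSpace) p p' (B : X -> R -> (X -> R) -> R -> R) :
  1 <= p -> 1 <= p' ->
  (forall f F g G fp Fp gp Gp fm Fm gm Gm,
        inD X p p' f F g G -> inD X p p' fp Fp gp Gp -> inD X p p' fm Fm gm Gm ->
        f = vscal (1/2) (vadd fp fm) -> F = (Fp + Fm) / 2 ->
        g = (fun x => (gp x + gm x) / 2) -> G = (Gp + Gm) / 2 ->
        B f F g G >= (B fp Fp gp Gp + B fm Fm gm Gm) / 2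
                     + Rabs ((fun x => gp x - gm x) (vsub fp fm))) ->
  forall m (P : nat -> pt X), (forall i, (i < 2 ^ m)%nat -> inDp X p p' (P i)) ->
  E m (fun i => B (pf (P i)) (pF (P i)) (pg (P i)) (pG (P i))) <=
  B (pf (tav midp m P)) (pF (tav midp m P)) (pg (tav midp m P)) (pG (tav midp m P)).
Proof.
  intros Hp Hp' Hb m. induction m as [|m IH]; intros P H.
  - unfold E; simpl; lra.
  - assert (0 < 2 ^ m)%nat by (apply Nat.neq_0_lt_0, Nat.pow_nonzero; lia).
    assert (H1 : forall i, (i < 2 ^ m)%nat -> inDp X p p' (P i)) by (intros; apply H; simpl; lia).
    assert (H2 : forall i, (i < 2 ^ m)%nat -> inDp X p p' (P (2 ^ m + i)%nat)) by (intros; apply H; simpl; lia).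
    pose proof (IH P H1) as I1. pose proof (IH _ H2) as I2.
    pose proof (tav_inD X p p' m P Hp Hp' H1) as D1.
    pose proof (tav_inD X p p' m _ Hp Hp' H2) as D2.
    set (t1 := tav midp m P) in *. set (t2 := tav midp m (fun i => P (2 ^ m + i)%nat)) in *.
    rewrite tav_S. fold t1 t2.
    unfold E. rewrite tav_S. fold (E m (fun i => B (pf (P i)) (pF (P i)) (pg (P i)) (pG (P i)))).
    fold (E m (fun i => B (pf (P (2 ^ m + i)%nat)) (pF (P (2 ^ m + i)%nat)) (pg (P (2 ^ m + i)%nat)) (pG (P (2 ^ m + i)%nat)))).
    assert (DM : inDp X p p' (midp t1 t2)) by (unfold inDp, midp; simpl; apply inD_mid; auto).
    pose proof (Hb _ _ _ _ _ _ _ _ _ _ _ _ DM D1 D2 eq_refl eq_refl eq_refl eq_refl) as Hm.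
    pose proof (Rabs_pos ((fun x => pg t1 x - pg t2 x) (vsub (pf t1) (pf t2)))).
    unfold Rmid. lra.
Qed.

Lemma E_sub m P Q : E m (fun i => P i - Q i) = E m P - E m Q.
Proof.
  replace (E m P - E m Q) with (1 * E m P + (-1) * E m Q) by ring. rewrite <- E_lin.
  apply E_ext; intros; ring.
Qed.

Lemma alg m (t w : nat -> nat -> R) (D : R) :
  (forall K L, (K < 2 ^ m)%nat -> (L < 2 ^ m)%nat -> w K L = t K K + t L L - t K L - t L K) ->
  (forall K, (K < 2 ^ m)%nat -> E m (fun L => t K L) = 0) ->
  (forall L, (L < 2 ^ m)%nat -> E m (fun K => t K L) = 0) ->
  E m (fun K => E m (fun L => Rabs (w K L))) <= D ->
  E m (fun K => E m (fun L => Rabs (t K L + t L K))) <= 4 * D.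
Proof.
  intros H1 H2 H3 H4.
  set (T := E m (fun K => t K K)).
  assert (Ew : forall K, (K < 2 ^ m)%nat -> E m (fun L => w K L) = t K K + T).
  { intros K HK. rewrite (E_ext m _ (fun L => (t K K + t L L) - (t K L + t L K))).
    rewrite E_sub, !E_add, E_const, H2, H3 by auto. unfold T. ring.
    intros L HL. rewrite H1 by auto. ring. }
  assert (EEw : E m (fun K => E m (fun L => w K L)) = 2 * T).
  { rewrite (E_ext m _ (fun K => t K K + T)) by auto. rewrite E_add, E_const. unfold T; ring. }
  assert (HT : Rabs (2 * T) <= E m (fun K => E m (fun L => Rabs (w K L)))).
  { rewrite <- EEw. eapply Rle_trans. apply E_abs. apply E_mono. intros. apply E_abs. }
  rewrite Rabs_mult, Rabs_pos_eq in HT by lra.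
  assert (Et : E m (fun K => Rabs (t K K)) <= E m (fun K => E m (fun L => Rabs (w K L))) + Rabs T).
  { rewrite <- (E_const m (Rabs T)). rewrite <- E_add. apply E_mono. intros K HK.
    replace (t K K) with (E m (fun L => w K L) - T) by (rewrite Ew; auto; ring).
    eapply Rle_trans. apply Rabs_triang. rewrite Rabs_Ropp. pose proof (E_abs m (fun L => w K L)). lra. }
  assert (Hs : E m (fun K => E m (fun L => Rabs (t K L + t L K))) <=
               E m (fun K => E m (fun L => Rabs (t K K) + Rabs (t L L) + Rabs (w K L)))).
  { apply E_mono; intros K HK; apply E_mono; intros L HL.
    replace (t K L + t L K) with (t K K + t L L - w K L) by (rewrite H1; auto; ring).
    unfold Rabs; repeat destruct Rcase_abs; lra. }
  rewrite (E_ext m (fun K => E m (fun L => Rabs (t K K) + Rabs (t L L) + Rabs (w K L)))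
                  (fun K => Rabs (t K K) + E m (fun L => Rabs (t L L)) + E m (fun L => Rabs (w K L)))) in Hs.
  2: { intros; rewrite !E_add, E_const; ring. }
  rewrite !E_add, E_const in Hs. lra.
Qed.

Lemma rsum_ext n f1 f2 : (forall i, (i < n)%nat -> f1 i = f2 i) -> rsum n f1 = rsum n f2.
Proof. induction n; intros H; simpl; auto. rewrite IHn, H; auto. Qed.

Lemma E_nonneg_abs m P : 0 <= E m (fun i => Rabs (P i)).
Proof. rewrite <- (E_const m 0). apply E_mono; intros; apply Rabs_pos. Qed.

Theorem mainTheorem6 :
  exists c : R, 0 < c /\
  forall (X : BanachSpace) (p p' beta : R),
    1 < p -> 1 / p + 1 / p' = 1 ->
    umd_constant X p beta ->
    forall B : X -> R -> (X -> R) -> R -> R,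
    (forall f F g G, inD X p p' f F g G ->
        0 <= B f F g G /\ B f F g G <= 4 * beta * rpow F (1 / p) * rpow G (1 / p')) ->
    (forall f F g G fp Fp gp Gp fm Fm gm Gm,
        inD X p p' f F g G -> inD X p p' fp Fp gp Gp -> inD X p p' fm Fm gm Gm ->
        f = vscal (1/2) (vadd fp fm) -> F = (Fp + Fm) / 2 ->
        g = (fun x => (gp x + gm x) / 2) -> G = (Gp + Gm) / 2 ->
        B f F g G >= (B fp Fp gp Gp + B fm Fm gm Gm) / 2
                     + Rabs ((fun x => gp x - gm x) (vsub fp fm))) ->
    forall (k : nat) (f : nat -> nat -> X) (F : nat -> nat -> R)
           (g : nat -> nat -> X -> R) (G : nat -> nat -> R),
    (1 <= k)%nat ->
    (forall n j, (n <= k)%nat -> (j < 2 ^ n)%nat -> inD X p p' (f n j) (F n j) (g n j) (G n j)) ->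
    (forall n j, (n < k)%nat -> (j < 2 ^ n)%nat ->
        f n j = vscal (1/2) (vadd (f (S n) (2 * j)%nat) (f (S n) (2 * j + 1)%nat)) /\
        F n j = (F (S n) (2 * j)%nat + F (S n) (2 * j + 1)%nat) / 2 /\
        g n j = (fun x => (g (S n) (2 * j)%nat x + g (S n) (2 * j + 1)%nat x) / 2) /\
        G n j = (G (S n) (2 * j)%nat + G (S n) (2 * j + 1)%nat) / 2) ->
    let lam := fun K L : nat =>
      (fun x => (g k L x - g O O x) / 2 ^ k) (vscal (/ 2 ^ k) (vsub (f k K) (f O O)))
      + (fun x => (g k K x - g O O x) / 2 ^ k) (vscal (/ 2 ^ k) (vsub (f k L) (f O O))) in
    rsum (2 ^ k) (fun K => rsum (2 ^ k) (fun L => Rabs (lam K L)))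
      <= c * Rpower 2 (INR k / 2) *
         (B (f O O) (F O O) (g O O) (G O O)
          - / 2 ^ k * rsum (2 ^ k) (fun j => B (f k j) (F k j) (g k j) (G k j))).
Proof.
  exists 4. split; [lra|].
  intros X p p' beta Hp Hpp' _ B _ Hb k f F g G Hk HD Htree lam.
  assert (Hp1 : 1 <= p) by lra.
  assert (Hp'1 : 1 <= p').
  { assert (0 < 1 / p < 1).
    { split. apply Rdiv_lt_0_compat; lra. apply (Rmult_lt_reg_r p); [lra|].
      field_simplify; lra. }
    destruct (Rle_dec p' 0) as [Hn|Hn].
    - destruct (Rle_lt_or_eq_dec _ _ Hn) as [Hl | ->].
      + assert (1 / p' < 0) by (unfold Rdiv; rewrite Rmult_1_l; apply Rinv_lt_0_compat; auto). lra.
      + unfold Rdiv at 2 in Hpp'. rewrite Rinv_0 in Hpp'. lra.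
    - assert (p' * (1 / p') = 1) by (field; lra).
      nra. }
  set (pt_at := fun n j => mkpt (f n j) (F n j) (g n j) (G n j)).
  set (leaf := fun i => pt_at k i).
  set (Bp := fun a : pt X => B (pf a) (pF a) (pg a) (pG a)).
  assert (Htr : forall m n j, (n + m = k)%nat -> (j < 2 ^ n)%nat ->
             pt_at n j = tav midp m (fun i => pt_at k (j * 2 ^ m + i)%nat)).
  { induction m as [|m IH]; intros n j Hnm Hj.
    - simpl. replace n with k by lia. rewrite Nat.mul_1_r, Nat.add_0_r. reflexivity.
    - destruct (Htree n j ltac:(lia) Hj) as [E1 [E2 [E3 E4]]].
      transitivity (midp (pt_at (S n) (2 * j)%nat) (pt_at (S n) (2 * j + 1)%nat)).
      { unfold midp, pt_at; simpl. rewrite E1, E2, E3, E4. reflexivity. }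
      rewrite (IH (S n) (2 * j)%nat), (IH (S n) (2 * j + 1)%nat) by (simpl; lia).
      rewrite tav_S. f_equal; apply tav_ext; intros i Hi; f_equal;
        rewrite Nat.pow_succ_r'; nia. }
  assert (HA0 : pt_at 0%nat 0%nat = tav midp k leaf).
  { rewrite (Htr k 0%nat 0%nat) by (simpl; lia). apply tav_ext. intros; reflexivity. }
  assert (Hleaf : forall i, (i < 2 ^ k)%nat -> inDp X p p' (leaf i)).
  { intros i Hi. apply (HD k i); auto. }
  set (D := Bp (tav midp k leaf) - E k (fun K => Bp (leaf K))).
  set (w := fun K L => Rabs ((fun x => pg (leaf K) x - pg (leaf L) x) (vsub (pf (leaf K)) (pf (leaf L))))).
  assert (Hpair : forall r, (r < 2 ^ k)%nat -> E k (fun K => w K (Nat.lxor K r)) <= D).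
  { intros r Hr.
    set (mK := fun K => midp (leaf K) (leaf (Nat.lxor K r))).
    assert (HmK : tav midp k mK = tav midp k leaf).
    { unfold mK. rewrite (tav_md midp midp_medial).
      rewrite (tav_xor midp midp_comm k leaf r Hr). apply midp_idem. }
    assert (HinK : forall K, (K < 2 ^ k)%nat -> inDp X p p' (mK K)).
    { intros K HK. pose proof (Hleaf K HK) as L1. pose proof (Hleaf _ (lxor_lt_pow2 k K r HK Hr)) as L2.
      unfold mK, inDp, midp; simpl. unfold inDp in L1, L2. apply inD_mid; auto. }
    pose proof (jensen X p p' B Hp1 Hp'1 Hb k mK HinK) as J.
    rewrite HmK in J. fold (Bp (tav midp k leaf)) in J.
    assert (Hm : E k (fun K => 1/2 * Bp (leaf K) + 1/2 * Bp (leaf (Nat.lxor K r)) + w K (Nat.lxor K r))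
                 <= E k (fun i => B (pf (mK i)) (pF (mK i)) (pg (mK i)) (pG (mK i)))).
    { apply E_mono. intros K HK.
      assert (DK : inDp X p p' (leaf K)) by (apply Hleaf; auto).
      assert (DK' : inDp X p p' (leaf (Nat.lxor K r))) by (apply Hleaf, lxor_lt_pow2; auto).
      pose proof (Hb _ _ _ _ _ _ _ _ _ _ _ _ (HinK K HK) DK DK' eq_refl eq_refl eq_refl eq_refl) as HH.
      unfold w, Bp. lra. }
    rewrite E_add, E_lin in Hm.
    assert (Ex : E k (fun K => Bp (leaf (Nat.lxor K r))) = E k (fun K => Bp (leaf K)))
      by (apply (tav_xor Rmid Rmid_comm k (fun K => Bp (leaf K)) r Hr)).
    rewrite Ex in Hm. unfold D. lra. }
  assert (HW : E k (fun K => E k (fun L => w K L)) <= D).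
  { rewrite (E_ext k _ (fun K => E k (fun r => w K (Nat.lxor K r)))).
    - rewrite E_fubini. rewrite <- (E_const k D). apply E_mono. intros r Hr. apply Hpair; auto.
    - intros K HK. unfold E. rewrite <- (tav_xor Rmid Rmid_comm k (fun L => w K L) K HK).
      apply tav_ext. intros; rewrite Nat.lxor_comm; reflexivity. }
  assert (Hlin : forall n j, (n <= k)%nat -> (j < 2 ^ n)%nat ->
            (forall x y, g n j (vadd x y) = g n j x + g n j y) /\ (forall a x, g n j (vscal a x) = a * g n j x)).
  { intros n j Hn Hj. destruct (HD n j Hn Hj) as [_ [[H1 [H2 _]] _]]. auto. }
  assert (Hf0 : f 0%nat 0%nat = pf (tav midp k leaf)) by (rewrite <- HA0; reflexivity).
  assert (Hg0 : g 0%nat 0%nat = pg (tav midp k leaf)) by (rewrite <- HA0; reflexivity).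
  destruct (Hlin 0%nat 0%nat ltac:(lia) ltac:(simpl; lia)) as [Ha0 Hs0].
  set (t := fun K L => g k L (f k K) - g k L (f 0%nat 0%nat) - g 0%nat 0%nat (f k K)
                       + g 0%nat 0%nat (f 0%nat 0%nat)).
  assert (Halg := alg k t (fun K L => (fun x => pg (leaf K) x - pg (leaf L) x) (vsub (pf (leaf K)) (pf (leaf L)))) D).
  assert (HE4 : forall m a b c d, E m (fun i => a i - b i - c + d) = E m a - E m b - c + d).
  { intros. rewrite (E_ext m _ (fun i => (a i - b i) + (d - c))) by (intros; ring).
    rewrite E_add, E_sub, E_const. ring. }
  assert (Hmain : E k (fun K => E k (fun L => Rabs (t K L + t L K))) <= 4 * D).
  { apply Halg.
    - intros K L HK HL. destruct (Hlin k K ltac:(lia) HK) as [HaK _].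
      destruct (Hlin k L ltac:(lia) HL) as [HaL _].
      unfold leaf, pt_at, t; simpl. rewrite (lin_sub X _ HaK), (lin_sub X _ HaL). ring.
    - intros K HK. unfold t. rewrite HE4.
      assert (e1 : E k (fun i => g k i (f k K)) = g 0%nat 0%nat (f k K)) by (rewrite Hg0, tav_pg; reflexivity).
      assert (e2 : E k (fun i => g k i (f 0%nat 0%nat)) = g 0%nat 0%nat (f 0%nat 0%nat)) by (rewrite Hg0, tav_pg; reflexivity).
      rewrite e1, e2. ring.
    - intros L HL. destruct (Hlin k L ltac:(lia) HL) as [HaL HsL]. unfold t.
      rewrite (E_ext k _ (fun K => g k L (pf (leaf K)) - g 0%nat 0%nat (pf (leaf K)) - g k L (f 0%nat 0%nat)
                                   + g 0%nat 0%nat (f 0%nat 0%nat))) by (intros; unfold leaf, pt_at; simpl; ring).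
      rewrite HE4.
      rewrite <- (tav_pf_lin (g k L) k leaf HaL HsL), <- (tav_pf_lin (g 0%nat 0%nat) k leaf Ha0 Hs0).
      rewrite <- Hf0. ring.
    - exact HW. }
  assert (Hpk : 0 < 2 ^ k) by (apply pow_lt; lra).
  assert (HL : rsum (2 ^ k) (fun K => rsum (2 ^ k) (fun L => Rabs (lam K L)))
               = E k (fun K => E k (fun L => Rabs (t K L + t L K)))).
  { rewrite rsumE. rewrite (E_ext k _ (fun K => 2 ^ k * E k (fun L => / (2 ^ k * 2 ^ k) * Rabs (t K L + t L K)))).
    - rewrite E_scal. rewrite (E_ext k _ (fun K => / (2 ^ k * 2 ^ k) * E k (fun L => Rabs (t K L + t L K)))).
      + rewrite E_scal. field. lra.
      + intros. rewrite E_scal. reflexivity.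
    - intros K HK. rewrite rsumE. f_equal. apply E_ext. intros L HL.
      destruct (Hlin k K ltac:(lia) HK) as [HaK HsK].
      destruct (Hlin k L ltac:(lia) HL) as [HaL HsL].
      unfold lam. rewrite HsK, HsL, Hs0, Hs0, (lin_sub X _ HaK), (lin_sub X _ HaL), !(lin_sub X _ Ha0).
      replace ((/ 2 ^ k * (g k L (f k K) - g k L (f 0%nat 0%nat)) - / 2 ^ k * (g 0%nat 0%nat (f k K) - g 0%nat 0%nat (f 0%nat 0%nat))) / 2 ^ k +
               (/ 2 ^ k * (g k K (f k L) - g k K (f 0%nat 0%nat)) - / 2 ^ k * (g 0%nat 0%nat (f k L) - g 0%nat 0%nat (f 0%nat 0%nat))) / 2 ^ k)
        with (/ (2 ^ k * 2 ^ k) * (t K L + t L K)) by (unfold t; field; lra).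
      rewrite Rabs_mult, (Rabs_pos_eq (/ _)). reflexivity.
      left; apply Rinv_0_lt_compat; nra. }
  rewrite HL.
  assert (HR : B (f 0%nat 0%nat) (F 0%nat 0%nat) (g 0%nat 0%nat) (G 0%nat 0%nat)
               - / 2 ^ k * rsum (2 ^ k) (fun j => B (f k j) (F k j) (g k j) (G k j)) = D).
  { change (B (f 0%nat 0%nat) (F 0%nat 0%nat) (g 0%nat 0%nat) (G 0%nat 0%nat)) with (Bp (pt_at 0%nat 0%nat)).
    rewrite HA0. rewrite rsumE. unfold D. change (fun j => B (f k j) (F k j) (g k j) (G k j)) with (fun j => Bp (leaf j)).
    field. lra. }
  rewrite HR.
  assert (HD0 : 0 <= D).
  { eapply Rle_trans; [|apply (Hpair 0%nat)]. apply E_nonneg_abs.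
    apply Nat.neq_0_lt_0, Nat.pow_nonzero; lia. }
  assert (HRp : 1 <= Rpower 2 (INR k / 2)).
  { unfold Rpower. pose proof (exp_ineq1_le (INR k / 2 * ln 2)).
    assert (0 <= INR k / 2 * ln 2).
    { apply Rmult_le_pos. apply Rmult_le_pos; [apply pos_INR | lra].
      left. pose proof ln_lt_2. lra. }
    lra. }
  nra.
Qed.
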